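(* Let $p$ be a prime and $n,d$ positive integers. For any $k\geq\lceil\frac{d+1}{p-1}\rceil$, if $h:\mathbb{F}_p^k\to\mathbb{F}_p$ satisfies $\deg(h)=k(p-1)-(d+1)$, then $h$ is a local characterization for $\mathrm{RM}[n,p,d]$, i.e. $\mathrm{RM}[n,p,d]=\mathcal{F}_n(h)$.
   Context: Functions $\mathbb{F}_q^m\to\mathbb{F}_q$ are identified with their unique polynomial representations with individual degrees in $\{0,\dots,q-1\}$; the degree is the maximal total degree of a monomial with nonzero coefficient. $\mathrm{RM}[n,q,d]$ is the set of functions $\mathbb{F}_q^n\to\mathbb{F}_q$ of degree at most $d$. For $f,g:\mathbb{F}_q^k\to\mathbb{F}_q$, $\langle f,g\rangle=\sum_{\alpha\in\mathbb{F}_q^k}f(\alpha)g(\alpha)\in\mathbb{F}_q$. Let $\mathcal{T}_{n,k}$ be the set of affine maps $T:\mathbb{F}_q^k\to\mathbb{F}_q^n$, and for $f:\mathbb{F}_q^n\to\mathbb{F}_q$ let $f\circ T:\mathbb{F}_q^k\to\mathbb{F}_q$, $x\mapsto f(T(x))$. For $h:\mathbb{F}_q^k\to\mathbb{F}_q$, $\mathcal{F}_n(h)=\{f:\mathbb{F}_q^n\to\mathbb{F}_q : \langle f\circ T,h\rangle=0 \text{ for all } T\in\mathcal{T}_{n,k}\}$, and $h$ is called a local characterization for $\mathcal{F}_n(h)$. *)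

(* Defs.v *)
From HB Require Import structures.
From mathcomp Require Import all_boot all_order all_algebra.
Set Implicit Arguments. Unset Strict Implicit. Unset Printing Implicit Defensive.
Import GRing.Theory.
Local Open Scope ring_scope.

Definition pt (F : Type) (m : nat) := {ffun 'I_m -> F}.

Definition expo (q m : nat) := {ffun 'I_m -> 'I_q}.

Definition tdeg (q m : nat) (e : expo q m) : nat := (\sum_(i < m) (e i : nat))%N.

Definition monom (F : comNzRingType) (q m : nat) (e : expo q m) (x : pt F m) : F :=
  \prod_(i < m) x i ^+ (e i : nat).

Definition represents (F : finComNzRingType) (m : nat)
    (c : expo #|F| m -> F) (f : pt F m -> F) : Prop :=
  forall x : pt F m, f x = \sum_(e : expo #|F| m) c e * monom e x.

Definition deg_le (F : finComNzRingType) (m : nat) (f : pt F m -> F) (D : nat) : Prop :=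
  exists c, represents c f /\ forall e, c e != 0 -> (tdeg e <= D)%N.

(* deg f = D (the representation being unique, this is the paper's notion). *)
Definition has_deg (F : finComNzRingType) (m : nat) (f : pt F m -> F) (D : nat) : Prop :=
  exists c, represents c f /\ (forall e, c e != 0 -> (tdeg e <= D)%N)
            /\ exists e, c e != 0 /\ tdeg e = D.

Definition RM (F : finComNzRingType) (n d : nat) (f : pt F n -> F) : Prop :=
  deg_le f d.

Definition inner (F : finComNzRingType) (k : nat) (f g : pt F k -> F) : F :=
  \sum_(a : pt F k) f a * g a.

Definition affine_app (F : comNzRingType) (n k : nat) (A : 'M[F]_(n, k)) (b : pt F n)
    (x : pt F k) : pt F n :=
  [ffun j => \sum_(i < k) A j i * x i + b j].

Definition in_Fn (F : finComNzRingType) (n k : nat) (h : pt F k -> F) (f : pt F n -> F) : Prop :=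
  forall (A : 'M[F]_(n, k)) (b : pt F n), inner (fun x => f (affine_app A b x)) h = 0.

Definition ceil_div (a b : nat) : nat := ((a + b - 1) %/ b)%N.

(* Main.v *)
Require Import Defs.
From mathcomp Require Import all_boot all_order all_algebra all_field.
From mathcomp Require Import zify ring.
Set Implicit Arguments. Unset Strict Implicit. Unset Printing Implicit Defensive.
Import GRing.Theory.
Local Open Scope ring_scope.

Section Gen.
Variable F : finFieldType.
Local Notation q := #|F|.
Local Notation P := q.-1.
Hypothesis hq0 : q%:R = 0 :> F.
Hypothesis hqn : forall m, (0 < m < q)%N -> m%:R != 0 :> F.

Lemma q_gt1 : (1 < q)%N. Proof. exact: card_finNzRing_gt1. Qed.
Lemma qE : q = P.+1. Proof. by rewrite prednK // ltnW // q_gt1. Qed.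
Lemma P_gt0 : (0 < P)%N. Proof. have := q_gt1; lia. Qed.

Lemma fermatU (t : F) : t != 0 -> t ^+ P = 1.
Proof.
move=> tnz; apply: (mulfI tnz); rewrite mulr1 -exprS -qE; exact: expf_card.
Qed.

Definition S j := \sum_(t : F) t ^+ j.

Lemma sum1 : \sum_(t : F) (1 : F) = 0.
Proof. by rewrite sumr_const; exact: hq0. Qed.

Lemma S_lt j : (j < P)%N -> S j = 0.
Proof.
elim/ltn_ind: j => j IH hj.
have E : S j.+1 = \sum_(t : F) (t + 1) ^+ j.+1.
  by rewrite /S (reindex_inj (addIr 1)).
move: E; rewrite /S.
under [in RHS]eq_bigr => t _ do rewrite exprD1n.
rewrite exchange_big /= big_ord_recr /= big_ord_recr /=.
rewrite [X in _ = X + _ + _]big1; last first.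
  move=> i _; under eq_bigr do rewrite -mulr_natr; rewrite -mulr_suml; have -> : \sum_(t : F) t ^+ i = 0.
    by apply: IH; rewrite /= ?(ltn_trans (ltn_ord i) hj).
  by rewrite mul0r.
rewrite add0r binn.
under [X in _ = X + _]eq_bigr do rewrite -mulr_natr.
rewrite -mulr_suml.
under [X in _ = _ + X]eq_bigr => t _ do rewrite mulr1n.
move/eqP; rewrite eq_sym -subr_eq0 addrK binSn mulf_eq0 => /orP [/eqP //|].
by move=> /negPn; rewrite hqn //; have := q_gt1; lia.
Qed.

Lemma S_P : S P = -1.
Proof.
have := sum1; rewrite (bigD1 0) //= => /eqP; rewrite addr_eq0 => /eqP E.
rewrite /S (bigD1 0) //= expr0n (negbTE (lt0n_neq0 P_gt0)) add0r E opprK.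
by apply: eq_bigr => t tnz; rewrite fermatU.
Qed.

Lemma S_shift j : (0 < j)%N -> S (j + P) = S j.
Proof.
move=> hj; apply: eq_bigr => t _; rewrite exprD.
have [->|tnz] := eqVneq t 0; last by rewrite fermatU // mulr1.
by rewrite !expr0n (negbTE (lt0n_neq0 P_gt0)) mulr0; case: j hj.
Qed.

Definition kap (m : nat) (t : F) := if m == 0%N then 1 - t ^+ P else - t ^+ (P - m).

Lemma kap_orth m m' : (m < q)%N -> (m' < q)%N ->
  \sum_(t : F) kap m t * t ^+ m' = (m == m')%:R.
Proof.
move=> hm hm'; rewrite /kap; case: eqP => [->|/eqP m0].
  under eq_bigr => t _ do rewrite mulrBl mul1r -exprD.
  rewrite sumrB -/(S m') -/(S (P + m')).
  case: m' hm' => [|m'] hm'.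
    by rewrite addn0 S_P S_lt ?P_gt0 // sub0r opprK.
  by rewrite addnC S_shift // subrr.
under eq_bigr => t _ do rewrite mulNr -exprD.
rewrite sumrN -/(S (P - m + m')).
have [lt|eq|gt] := ltngtP m m'.
- rewrite (_ : (P - m + m' = (m' - m) + P)%N); last by rewrite qE in hm hm'; lia.
  rewrite S_shift ?subn_gt0 // S_lt ?oppr0 //; rewrite qE in hm hm'; lia.
- rewrite S_lt ?oppr0 //; rewrite qE in hm hm'; lia.
- rewrite -gt subnK ?S_P ?opprK //; rewrite qE in hm; lia.
Qed.

Lemma kap_interp (s r : F) : \sum_(m < q) kap m s * r ^+ m = (s == r)%:R.
Proof.
have E : \sum_(m < q) kap m s * r ^+ m = 1 - \sum_(m < q) s ^+ (P - m) * r ^+ m.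
  rewrite qE !big_ord_recl /= /kap /= expr0 !mulr1 subn0 opprD addrA; congr (_ + _).
  rewrite -sumrN; apply: eq_bigr => i _ /=; by rewrite mulNr.
rewrite E; have [->|neq] := eqVneq s r.
  rewrite (eq_bigr (fun _ => r ^+ P)) => [|i _]; last by rewrite -exprD subnK // -ltnS -qE.
  have H0 : (#|F|%:R : F) = 0 by exact: hq0.
  by rewrite -(big_mkord xpredT (fun _ => r ^+ P)) sumr_const_nat subn0 -[r ^+ _ *+ _]mulr_natr H0 mulr0 subr0.
have : s ^+ q - r ^+ q = (s - r) * \sum_(i < q) s ^+ (q.-1 - i) * r ^+ i by apply: subrXX.
rewrite !expf_card -{1}[s - r]mulr1 => /mulfI <-; first by rewrite subrr.
by rewrite subr_eq0.
Qed.

Lemma prod_ind (m : nat) (T : eqType) (u v : 'I_m -> T) :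
  \prod_(i < m) ((u i == v i)%:R : F) = [forall i, u i == v i]%:R.
Proof.
case: forallP => [H|/forallP/forallPn [i ni]].
  by rewrite big1 // => i _; rewrite H.
by rewrite (bigD1 i) //= (negbTE ni) mul0r.
Qed.

Definition Kf (m : nat) (e : expo q m) (x : pt F m) := \prod_(i < m) kap (e i) (x i).

Lemma K_orth (m : nat) (e e' : expo q m) :
  \sum_(x : pt F m) Kf e x * monom e' x = (e == e')%:R.
Proof.
transitivity (\prod_(i < m) \sum_(t : F) kap (e i) t * t ^+ e' i).
  rewrite bigA_distr_bigA; apply: eq_bigr => x _; by rewrite /Kf /monom -big_split.
under eq_bigr => i _ do rewrite kap_orth //.
rewrite prod_ind; congr ((nat_of_bool _)%:R).
apply/idP/idP => [/forallP H|/eqP ->]; last by apply/forallP.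
apply/eqP/ffunP => i; apply: val_inj; exact/eqP/H.
Qed.

Lemma K_interp (m : nat) (x y : pt F m) :
  \sum_(e : expo q m) Kf e x * monom e y = (x == y)%:R.
Proof.
transitivity (\prod_(i < m) \sum_(j < q) kap j (x i) * y i ^+ j).
  rewrite bigA_distr_bigA; apply: eq_bigr => e _; by rewrite /Kf /monom -big_split.
under eq_bigr => i _ do rewrite kap_interp.
rewrite prod_ind; congr ((nat_of_bool _)%:R).
apply/idP/idP => [/forallP H|/eqP ->]; last by apply/forallP.
apply/eqP/ffunP => i; exact/eqP/H.
Qed.

Definition coef (m : nat) (f : pt F m -> F) (e : expo q m) := \sum_(x : pt F m) f x * Kf e x.

Lemma rep_coef (m : nat) (f : pt F m -> F) : represents (coef f) f.
Proof.
move=> y; rewrite /coef.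
under eq_bigr => e _ do rewrite mulr_suml.
rewrite exchange_big /=.
under eq_bigr => x _ do (under eq_bigr => e _ do rewrite -mulrA).
under eq_bigr => x _ do rewrite -mulr_sumr K_interp.
rewrite (bigD1 y) //= eqxx mulr1 big1 ?addr0 // => x /negbTE ->; by rewrite mulr0.
Qed.

Lemma sum_delta (m : nat) (a : 'I_m) (g : 'I_m -> F) :
  \sum_(j < m) (j == a)%:R * g j = g a.
Proof.
rewrite (bigD1 a) //= eqxx mul1r big1 ?addr0 // => j /negbTE ->; by rewrite mul0r.
Qed.

Variable k : nat.
Variable h : pt F k -> F.

Lemma good_ext m (g g' : pt F m -> F) : (forall x, g x = g' x) -> in_Fn h g -> in_Fn h g'.
Proof. move=> E H A b; rewrite -(H A b) /inner; apply: eq_bigr => x _; by rewrite E. Qed.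

Lemma good_sum m (I : finType) (a : I -> F) (G : I -> pt F m -> F) :
  (forall i, in_Fn h (G i)) -> in_Fn h (fun x => \sum_i a i * G i x).
Proof.
move=> H A b; rewrite /inner.
under eq_bigr => x _ do rewrite mulr_suml.
rewrite exchange_big /= big1 // => i _.
under eq_bigr => x _ do rewrite -mulrA.
by rewrite -mulr_sumr; have := H i A b; rewrite /inner => ->; rewrite mulr0.
Qed.

Lemma good_scale m (c : F) (g : pt F m -> F) :
  c != 0 -> in_Fn h (fun x => c * g x) -> in_Fn h g.
Proof.
move=> cnz H A b; have := H A b; rewrite /inner.
under eq_bigr => x _ do rewrite -mulrA.
by rewrite -mulr_sumr => /eqP; rewrite mulf_eq0 (negbTE cnz) => /eqP.
Qed.

Lemma affine_comp m m' (A' : 'M[F]_(m, m')) (b' : pt F m) (A : 'M[F]_(m', k))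
  (b : pt F m') (x : pt F k) :
  affine_app A' b' (affine_app A b x) =
  affine_app (A' *m A) [ffun j => \sum_i A' j i * b i + b' j] x.
Proof.
apply/ffunP => j; rewrite !ffunE.
under eq_bigr => i _ do rewrite ffunE mulrDr.
rewrite big_split /= addrA; congr (_ + _ + _).
under eq_bigr => i _ do rewrite big_distrr.
rewrite exchange_big /=; apply: eq_bigr => l _; rewrite mxE big_distrl /=.
by apply: eq_bigr => i _; rewrite mulrA.
Qed.

Lemma good_comp m m' (g : pt F m -> F) (A' : 'M[F]_(m, m')) (b' : pt F m) :
  in_Fn h g -> in_Fn h (fun x => g (affine_app A' b' x)).
Proof. move=> H A b; rewrite /inner; under eq_bigr => x _ do rewrite affine_comp; exact: H. Qed.

Lemma good_extract m (G : 'I_q -> pt F m -> F) :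
  (forall t : F, in_Fn h (fun x => \sum_(j < q) t ^+ j * G j x)) -> forall i, in_Fn h (G i).
Proof.
move=> H i; apply: (good_ext _ (good_sum (fun t => kap i t) H)) => x.
under eq_bigr => t _ do rewrite big_distrr.
rewrite exchange_big /= (bigD1 i) //= [X in _ + X]big1 ?addr0 => [|j ji].
  under eq_bigr => t _ do rewrite mulrA.
  by rewrite -mulr_suml kap_orth // eqxx mul1r.
under eq_bigr => t _ do rewrite mulrA.
by rewrite -mulr_suml kap_orth // val_eqE eq_sym (negbTE ji) mul0r.
Qed.

Definition Dm m (t : pt F m) : 'M[F]_(m, m) := \matrix_(i, j) ((j == i)%:R * t i).

Lemma Dm_app m (t y : pt F m) : affine_app (Dm t) ([ffun => 0] : pt F m) y = [ffun j => t j * y j].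
Proof.
apply/ffunP => j; rewrite !ffunE addr0.
under eq_bigr => i _ do rewrite mxE -mulrA.
by rewrite sum_delta.
Qed.

Lemma monom_mul m (e : expo q m) (t y : pt F m) :
  monom e [ffun j => t j * y j] = monom e t * monom e y.
Proof. rewrite /monom -big_split; apply: eq_bigr => i _; by rewrite ffunE exprMn. Qed.

Lemma good_monom m (f : pt F m -> F) c : represents c f -> in_Fn h f ->
  forall e, in_Fn h (fun x => c e * monom e x).
Proof.
move=> rc H e.
have G : forall t : pt F m, in_Fn h (fun y => f (affine_app (Dm t) ([ffun => 0] : pt F m) y)).
  by move=> t; exact: good_comp.
apply: (good_ext _ (good_sum (fun t => Kf e t) G)) => y.
rewrite (eq_bigr (fun t => \sum_(e' : expo q m) Kf e t * monom e' t * (c e' * monom e' y)));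
  last first.
  move=> t _; rewrite Dm_app rc big_distrr; apply: eq_bigr => e' _ /=.
  by rewrite monom_mul -mulrA [c e' * _]mulrCA.
rewrite exchange_big /= (bigD1 e) //= [X in _ + X]big1 ?addr0.
  by rewrite -mulr_suml K_orth eqxx mul1r.
by move=> e' ne; rewrite -mulr_suml K_orth eq_sym (negbTE ne) mul0r.
Qed.

Definition mono m (u : 'I_m -> nat) (x : pt F m) := \prod_(i < m) x i ^+ u i.

Lemma good_step m (u : 'I_m -> nat) (l l' : 'I_m) (be ga : F) :
  (0 < u l < q)%N -> in_Fn h (mono u) ->
  in_Fn h (fun x => x l ^+ (u l).-1 * (be + ga * x l') * \prod_(i < m | i != l) x i ^+ u i).
Proof.
move=> /andP [ul0 ulq] H.
pose A (t : F) : 'M[F]_(m, m) :=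
  \matrix_(i, j) ((j == i)%:R + (i == l)%:R * ((j == l')%:R * (t * ga))).
pose b (t : F) : pt F m := [ffun i => (i == l)%:R * (t * be)].
have Tl t x : affine_app (A t) (b t) x l = x l + t * (be + ga * x l').
  rewrite !ffunE eqxx mul1r.
  under eq_bigr => j _ do rewrite mxE eqxx mul1r mulrDl -mulrA.
  rewrite big_split /= !sum_delta mulrDr; by rewrite addrA [t * (ga * _)]mulrA [t * ga]mulrC addrAC.
have Ti t x i : i != l -> affine_app (A t) (b t) x i = x i.
  move=> /negbTE il; rewrite !ffunE il mul0r addr0.
  under eq_bigr => j _ do rewrite mxE il mul0r addr0.
  by rewrite sum_delta.
pose G (j : 'I_q) (x : pt F m) :=
  (x l ^+ (u l - j) * (be + ga * x l') ^+ j) *+ 'C(u l, j) * \prod_(i < m | i != l) x i ^+ u i.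
have E t x : mono u (affine_app (A t) (b t) x) = \sum_(j < q) t ^+ j * G j x.
  rewrite /mono (bigD1 l) //= Tl exprDn.
  rewrite (eq_bigr (fun i => x i ^+ u i)) => [|i il]; last by rewrite Ti.
  rewrite mulr_suml (big_ord_widen q (fun j => x l ^+ (u l - j) * (t * (be + ga * x l')) ^+ j *+ 'C(u l, j) * \prod_(i < m | i != l) x i ^+ u i) ulq).
  rewrite big_mkcond /=; apply: eq_bigr => j _; rewrite /G.
  case: ifP => hj.
    by rewrite exprMn; ring.
  by rewrite bin_small ?mulr0n ?mul0r ?mulr0 // ltnNge -ltnS hj.
have q1 : (1 < q)%N by exact: q_gt1.
have := good_extract (fun t => good_ext (E t) (good_comp (A t) (b t) H)) (Ordinal q1).
move=> HG; apply: (@good_scale _ (u l)%:R); first by rewrite hqn // ul0.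
apply: good_ext HG => x; rewrite /G /= bin1 subn1 expr1 -mulr_natl; by rewrite !mulrA.
Qed.

Lemma good_lower m (u : 'I_m -> nat) l : (0 < u l < q)%N -> in_Fn h (mono u) ->
  in_Fn h (mono (fun i => if i == l then (u l).-1 else u i)).
Proof.
move=> hu H; apply: (good_ext _ (good_step l 1 0 hu H)) => x.
rewrite mul0r addr0 mulr1 /mono [RHS](bigD1 l) //= eqxx; congr (_ * _).
by apply: eq_bigr => i /negbTE ->.
Qed.

Lemma good_move m (u : 'I_m -> nat) l l' : l' != l -> (0 < u l < q)%N -> in_Fn h (mono u) ->
  in_Fn h (mono (fun i => if i == l then (u l).-1 else if i == l' then (u l').+1 else u i)).
Proof.
move=> nl hu H; apply: (good_ext _ (good_step l' 0 1 hu H)) => x.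
rewrite add0r mul1r /mono [RHS](bigD1 l) //= eqxx.
rewrite [in LHS](bigD1 l') //= [in RHS](bigD1 l') //=.
rewrite (negbTE nl) eqxx exprS -!mulrA; congr (_ * (_ * (_ * _))).
by apply: eq_bigr => i /andP [/negbTE -> /negbTE ->].
Qed.

Definition dist (a b : nat) := ((a - b) + (b - a))%N.

Lemma sumD1n m (g : 'I_m -> nat) l : (\sum_i g i = g l + \sum_(i | i != l) g i)%N.
Proof. by rewrite (bigD1 l). Qed.

Lemma sumD2n m (g : 'I_m -> nat) l l' : l' != l ->
  (\sum_i g i = g l + (g l' + \sum_(i | (i != l) && (i != l')) g i))%N.
Proof. by move=> nl; rewrite (bigD1 l) //= (bigD1 l'). Qed.

Lemma sum_eq_le m (u w : 'I_m -> nat) : (forall i, u i <= w i)%N ->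
  (\sum_i w i <= \sum_i u i)%N -> forall i, u i = w i.
Proof.
move=> le hs i; apply/eqP; rewrite eqn_leq le /= leqNgt; apply/negP => lt.
have : (\sum_i u i < \sum_i w i)%N.
  rewrite (sumD1n u i) (sumD1n w i) -addSn leq_add //; exact: leq_sum.
by rewrite ltnNge hs.
Qed.

Lemma good_reach m (w : 'I_m -> nat) : (forall i, w i < q)%N ->
  forall N (u : 'I_m -> nat), (\sum_i dist (u i) (w i) <= N)%N -> (forall i, u i < q)%N ->
  (\sum_i w i <= \sum_i u i)%N -> in_Fn h (mono u) -> in_Fn h (mono w).
Proof.
move=> hw N; elim: N => [|N IH] u hd hu hs H;
  (case: (boolP [exists i, (w i < u i)%N]) => [/existsP [l hl]|/existsP hn]);
  try (apply: good_ext H => x; rewrite /mono; apply: eq_bigr => i _;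
       rewrite (@sum_eq_le _ u w) // => j; rewrite leqNgt; apply/negP => c; apply: hn; by exists j).
- by move: hd; rewrite (sumD1n _ l) /dist; lia.
case: (boolP [exists i, (u i < w i)%N]) => [/existsP [l' hl']|/existsP hn'].
  have nl : l' != l by apply/eqP => e; move: hl hl'; rewrite e; lia.
  have ul : (0 < u l < q)%N by rewrite hu andbT; lia.
  move: (good_move nl ul H); set u' := fun i => if i == l then _ else _ => H'.
  have R (g : nat -> nat -> nat) : (\sum_(i | (i != l) && (i != l')) g (u' i) (w i) =
                  \sum_(i | (i != l) && (i != l')) g (u i) (w i))%N.
    by apply: eq_bigr => i /andP [/negbTE hi /negbTE hi']; rewrite /u' hi hi'.
  apply: (IH u') => //.
  - move: hd; rewrite (sumD2n _ nl) (sumD2n (fun i => dist (u' i) (w i)) nl) (R dist).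
    rewrite /u' eqxx (negbTE nl) eqxx /dist; lia.
  - move=> i; rewrite /u'; case: ifP => _; first by have := hu l; lia.
    case: (i == l'); [by have := hw l'; lia | exact: hu].
  - move: hs; rewrite (sumD2n u nl) (sumD2n u' nl).
    rewrite (R (fun a _ => a)) /u' eqxx (negbTE nl) eqxx; lia.
have ul : (0 < u l < q)%N by rewrite hu andbT; lia.
move: (good_lower ul H); set u' := fun i => if i == l then _ else _ => H'.
have R (g : nat -> nat -> nat) : (\sum_(i | i != l) g (u' i) (w i) = \sum_(i | i != l) g (u i) (w i))%N.
  by apply: eq_bigr => i /negbTE hi; rewrite /u' hi.
have le : forall i, (w i <= u i)%N.
  by move=> i; rewrite leqNgt; apply/negP => c; apply: hn'; exists i.
have lt : (\sum_i w i < \sum_i u i)%N.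
  rewrite (sumD1n u l) (sumD1n w l) -addSn leq_add //; exact: leq_sum.
apply: (IH u') => //.
- move: hd; rewrite (sumD1n _ l) (sumD1n (fun i => dist (u' i) (w i)) l) (R dist).
  rewrite /u' eqxx /dist; lia.
- move=> i; rewrite /u'; case: ifP => _ //; by have := hu l; lia.
- move: lt; rewrite (sumD1n u l) (sumD1n u' l).
  rewrite (R (fun a _ => a)) /u' eqxx; lia.
Qed.

Lemma split_l n kk (j : 'I_n) : split (lshift kk j) = inl j.
Proof. exact: (unsplitK (inl _ j)). Qed.
Lemma split_r n kk (j : 'I_kk) : split (rshift n j) = inr j.
Proof. exact: (unsplitK (inr _ j)). Qed.

Lemma good_up n kk (e : 'I_n -> nat) : in_Fn h (mono e) ->
  in_Fn h (mono (fun i : 'I_(n + kk) => match split i with inl j => e j | inr _ => 0%N end)).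
Proof.
move=> H.
pose A' : 'M[F]_(n, n + kk) := \matrix_(j, i) (i == lshift kk j)%:R.
apply: (good_ext _ (good_comp A' ([ffun => 0] : pt F n) H)) => x.
rewrite /mono big_split_ord /= [X in _ = _ * X]big1 ?mulr1 => [|j _]; last first.
  by rewrite split_r expr0.
apply: eq_bigr => j _; rewrite split_l !ffunE addr0.
under eq_bigr => i _ do rewrite mxE.
by rewrite sum_delta.
Qed.

Lemma good_down n kk (b : 'I_kk -> nat) :
  in_Fn h (mono (fun i : 'I_(n + kk) => match split i with inl _ => 0%N | inr j => b j end)) ->
  in_Fn h (mono b).
Proof.
move=> H.
pose A' : 'M[F]_(n + kk, kk) := \matrix_(i, j) (i == rshift n j)%:R.
apply: (good_ext _ (good_comp A' ([ffun => 0] : pt F (n + kk)) H)) => x.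
rewrite /mono big_split_ord /= [X in X * _ = _]big1 ?mul1r => [|j _]; last first.
  by rewrite split_l expr0.
apply: eq_bigr => j _; rewrite split_r !ffunE addr0.
under eq_bigr => i _ do rewrite mxE (inj_eq (@rshift_inj _ _)) eq_sym.
by rewrite sum_delta.
Qed.

Lemma sum_mono m (u : 'I_m -> nat) : \sum_(x : pt F m) mono u x = \prod_i S (u i).
Proof. by rewrite /S bigA_distr_bigA. Qed.

Lemma mono_mul m (u v : 'I_m -> nat) x : mono u x * mono v x = mono (fun i => u i + v i)%N x.
Proof. by rewrite /mono -big_split; apply: eq_bigr => i _; rewrite exprD. Qed.

Lemma affine_id (x : pt F k) :
  affine_app (\matrix_(i, j) (j == i)%:R) ([ffun => 0] : pt F k) x = x.
Proof.
apply/ffunP => j; rewrite !ffunE addr0.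
under eq_bigr => i _ do rewrite mxE.
by rewrite sum_delta.
Qed.

Lemma not_good_b L (a : expo q k) c : represents c h -> (forall e, c e != 0 -> (tdeg e <= L)%N) ->
  c a != 0 -> tdeg a = L -> ~ in_Fn h (mono (fun i => P - a i)%N).
Proof.
move=> rc hc ca ta H.
have := H (\matrix_(i, j) (j == i)%:R) ([ffun => 0] : pt F k).
rewrite /inner.
under eq_bigr => x _ do rewrite affine_id rc mulr_sumr.
rewrite exchange_big /= (bigD1 a) //= [X in _ + X]big1 ?addr0 => [|e ne].
  under eq_bigr => x _ do rewrite mulrCA -[monom a x]/(mono (fun i => a i) x) mono_mul.
  rewrite -mulr_sumr sum_mono => /eqP; rewrite mulf_eq0 (negbTE ca) /=.
  rewrite (eq_bigr (fun _ => S P)) => [|i _]; last first.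
    by rewrite subnK // -ltnS -qE.
  by rewrite S_P prodr_const expf_eq0 oppr_eq0 oner_eq0 andbF.
have [->|cne] := eqVneq (c e) 0.
  by rewrite big1 // => x _; rewrite mul0r mulr0.
under eq_bigr => x _ do rewrite mulrCA -[monom e x]/(mono (fun i => e i) x) mono_mul.
rewrite -mulr_sumr sum_mono.
have [i hi] : exists i, (P - a i + e i < P)%N.
  case: (boolP [exists i, (P - a i + e i < P)%N]) => [/existsP //|hn]; exfalso.
  rewrite negb_exists in hn; move/forallP: hn => hn.
  move/negP: ne; apply; apply/eqP/ffunP => i.
  apply: val_inj; symmetry; apply: (@sum_eq_le _ (fun i => nat_of_ord (a i)) (fun i => nat_of_ord (e i))).
  - move=> j; have := hn j; have := ltn_ord (a j); lia.
  - have := hc e cne; rewrite -ta => H1; exact: H1.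
by rewrite (bigD1 i) //= S_lt // mul0r mulr0.
Qed.

Definition Ann (D : nat) (g : pt F k -> F) := forall c : 'I_k -> nat,
  (\sum_i c i + D < k * P)%N -> \sum_(x : pt F k) g x * mono c x = 0.

Lemma Ann_ext D g g' : (forall x, g x = g' x) -> Ann D g -> Ann D g'.
Proof. move=> E H c hc; rewrite -[RHS](H c hc); apply: eq_bigr => x _; by rewrite E. Qed.

Lemma Ann0 : Ann 0 (fun _ => 1).
Proof.
move=> c hc; under eq_bigr do rewrite mul1r; rewrite sum_mono.
case: (boolP [exists i, (c i < P)%N]) => [/existsP [i hi]|hn].
  by rewrite (bigD1 i) //= S_lt // mul0r.
exfalso; rewrite negb_exists in hn.
have : (\sum_(i < k) P <= \sum_i c i)%N.
  by apply: leq_sum => i _; have := forallP hn i; lia.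
rewrite big_const_ord iter_addn_0; lia.
Qed.

Lemma Ann_le D D' g : (D <= D')%N -> Ann D g -> Ann D' g.
Proof. move=> le H c hc; apply: H; lia. Qed.

Lemma Ann_sum D (I : finType) (G : I -> pt F k -> F) :
  (forall i, Ann D (G i)) -> Ann D (fun x => \sum_i G i x).
Proof.
move=> H c hc; under eq_bigr do rewrite mulr_suml.
rewrite exchange_big /= big1 // => i _; exact: H.
Qed.

Lemma Ann_scale D a g : Ann D g -> Ann D (fun x => a * g x).
Proof.
move=> H c hc; under eq_bigr do rewrite -mulrA.
by rewrite -mulr_sumr H // mulr0.
Qed.

Lemma mono_delta (i : 'I_k) (x : pt F k) : mono (fun j => (j == i) : nat) x = x i.
Proof.
rewrite /mono (bigD1 i) //= eqxx expr1 big1 ?mulr1 // => j /negbTE ->; by rewrite expr0.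
Qed.

Lemma Ann_aff D (al : 'I_k -> F) be g : Ann D g ->
  Ann D.+1 (fun x => (\sum_i al i * x i + be) * g x).
Proof.
move=> H c hc.
under eq_bigr => x _ do rewrite mulrDl mulr_suml mulrDl mulr_suml.
rewrite big_split /= exchange_big /= [X in X + _]big1 => [|i _].
  rewrite add0r; under eq_bigr do rewrite -!mulrA; rewrite -mulr_sumr H ?mulr0 //; lia.
under eq_bigr => x _ do rewrite -(mono_delta i x) -!mulrA [mono _ x * _]mulrCA mono_mul.
rewrite -mulr_sumr H ?mulr0 //.
have -> : (\sum_j ((j == i) + c j) = 1 + \sum_j c j)%N.
  rewrite big_split /= (bigD1 i) //= eqxx big1 // => j /negbTE -> //.
lia.
Qed.

Lemma Ann_pow D (al : 'I_k -> F) be g m : Ann D g ->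
  Ann (D + m)%N (fun x => (\sum_i al i * x i + be) ^+ m * g x).
Proof.
move=> H; elim: m => [|m IH].
  by rewrite addn0; apply: Ann_ext H => x; rewrite expr0 mul1r.
rewrite addnS; apply: Ann_ext (Ann_aff al be IH) => x; by rewrite exprS mulrA.
Qed.

Lemma Ann_prod n (A : 'M[F]_(n, k)) (b : pt F n) (e : 'I_n -> nat) :
  Ann (\sum_j e j)%N (fun x => mono e (affine_app A b x)).
Proof.
rewrite /mono; elim: (index_enum _) => [|j s IH].
  by rewrite big_nil; apply: Ann_ext Ann0 => x; rewrite big_nil.
rewrite big_cons addnC; apply: Ann_ext (Ann_pow (m := e j) (fun i => A j i) (b j) IH) => x.
by rewrite big_cons ffunE.
Qed.

Lemma fwd n d L (f : pt F n -> F) : (L + d.+1 = k * P)%N -> deg_le h L -> deg_le f d ->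
  in_Fn h f.
Proof.
move=> hL [ch [rch hch]] [cf [rcf hcf]] A b.
have HA : Ann d (fun x => f (affine_app A b x)).
  apply: Ann_ext (fun x => esym (rcf _)) _; apply: Ann_sum => e.
  have [->|ne] := eqVneq (cf e) 0.
    by move=> c _; apply: big1 => x _; rewrite !mul0r.
  apply: (Ann_le (hcf e ne)); apply: Ann_scale; exact: Ann_prod.
rewrite /inner; under eq_bigr => x _ do rewrite (rch x) mulr_sumr.
rewrite exchange_big /= big1 // => c _.
have [->|ne] := eqVneq (ch c) 0.
  by apply: big1 => x _; rewrite mul0r mulr0.
under eq_bigr do rewrite mulrCA.
rewrite -mulr_sumr HA ?mulr0 //; move: (hch c ne); rewrite /tdeg => H1.
apply: (@leq_trans (L + d).+1); first by rewrite ltnS leq_add2r; exact: H1.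
by rewrite -hL addnS.
Qed.

Theorem main_gen n d L (f : pt F n -> F) : (L + d.+1 = k * P)%N -> has_deg h L ->
  RM d f <-> in_Fn h f.
Proof.
move=> hL [ch [rch [hch [a [ha ta]]]]]; split.
  by move=> Hf; apply: (fwd hL) Hf; exists ch; split.
move=> Hf; exists (coef f); split; first exact: rep_coef.
move=> e ne; rewrite leqNgt; apply/negP => lt.
have H1 : in_Fn h (mono (fun i => nat_of_ord (e i))).
  exact: (good_scale ne (good_monom (rep_coef f) Hf e)).
pose b := fun i => (P - a i)%N.
have H2 := good_up (kk := k) H1.
set E := fun i : 'I_(n + k) => _ in H2.
pose B := fun i : 'I_(n + k) => match split i with inl _ => 0%N | inr j => b j end.
have hab : (\sum_i b i = d.+1)%N.
  have : (\sum_(i < k) (b i + a i) = k * P)%N.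
    rewrite (eq_bigr (fun _ => P)) => [|i _]; last first.
      by rewrite /b subnK // -ltnS -qE.
    by rewrite big_const_ord iter_addn_0 mulnC.
  rewrite big_split /= -hL; move: ta; rewrite /tdeg => ->; lia.
have H3 : in_Fn h (mono B).
  apply: (good_reach _ (leqnn (\sum_i dist (E i) (B i))%N)) => //.
  - move=> i; rewrite /B; case: split => j; have := q_gt1; rewrite /b; lia.
  - move=> i; rewrite /E; case: split => j; last by have := q_gt1; lia.
    by case: (e j).
  - rewrite /B /E !big_split_ord /=.
    rewrite (eq_bigr (fun _ => 0%N)) => [|j _]; last by rewrite split_l.
    rewrite [X in (_ <= _ + X)%N](eq_bigr (fun _ => 0%N)) => [|j _]; last by rewrite split_r.
    rewrite (eq_bigr (fun j => b j)) => [|j _]; last by rewrite split_r.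
    rewrite [X in (_ <= X + _)%N](eq_bigr (fun j => nat_of_ord (e j))) => [|j _]; last by rewrite split_l.
    rewrite !big1_eq add0n addn0 hab; exact: lt.
have H4 := good_down H3.
exact: (not_good_b rch hch ha ta H4).
Qed.

End Gen.

Unset Implicit Arguments.
Set Strict Implicit.

Theorem lemma3p2 (p n d k : nat) (hp : prime p) (hn : (0 < n)%N) (hd : (0 < d)%N)
  (hk : (ceil_div d.+1 p.-1 <= k)%N)
  (h : pt 'F_p k -> 'F_p) (hdeg : has_deg h (k * p.-1 - d.+1)%N) :
  forall f : pt 'F_p n -> 'F_p, @RM _ n d f <-> in_Fn h f.
Proof.
move=> f.
have hp1 : (1 < p)%N := prime_gt1 hp.
have hq0 : (#|'F_p|%:R : 'F_p) = 0 by rewrite card_Fp // pchar_Fp_0.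
have hqn : forall m, (0 < m < #|'F_p|)%N -> m%:R != 0 :> 'F_p.
  move=> m; rewrite card_Fp // => /andP [m0 mp]; apply/negP => /eqP E.
  have := congr1 (fun x : 'F_p => nat_of_ord x) E; rewrite val_Fp_nat // modn_small //= => E'.
  by move: m0; rewrite E'.
have hkP : (d.+1 <= k * p.-1)%N.
  have P0 : (0 < p.-1)%N by lia.
  have h1 := ltn_ceil (d.+1 + p.-1 - 1) P0.
  move: hk; rewrite /ceil_div => hk.
  have h2 : (((d.+1 + p.-1 - 1) %/ p.-1).+1 * p.-1 <= k.+1 * p.-1)%N by rewrite leq_mul2r ltnS hk orbT.
  move: h1 h2; rewrite !mulSn; lia.
have hL : ((k * p.-1 - d.+1) + d.+1 = k * #|'F_p|.-1)%N by rewrite card_Fp // subnK.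
exact: (main_gen hq0 hqn f hL hdeg).
Qed.
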